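(* For every integer $d\ge2$, the state on $\mathbb{C}^d\otimes\mathbb{C}^d$ $$\Upsilon=\frac{d}{2d-1}P_+ +\frac{1}{2d-1}\sum_{i=1}^{d-1}|i\,0\rangle\langle i\,0|$$ is symmetrically extendible, where $P_+=|\Psi_+\rangle\langle\Psi_+|$, $|\Psi_+\rangle=\frac1{\sqrt d}\sum_{i=0}^{d-1}|ii\rangle$.
   Context: A state $\rho_{AB}$ on $\mathcal{H}_A\otimes\mathcal{H}_B$ is called symmetrically extendible if there is a state $\rho_{ABB'}$ on $\mathcal{H}_A\otimes\mathcal{H}_B\otimes\mathcal{H}_{B'}$, with $\mathcal{H}_{B'}\cong\mathcal{H}_B$, such that $\rho_{ABB'}$ is invariant under the swap of $B$ and $B'$ and $\mathrm{Tr}_{B'}\rho_{ABB'}=\rho_{AB}$. $|i\,0\rangle=|i\rangle_A|0\rangle_B$. *)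

(* Defs.v *)
(* Complex scalars: any numeric algebraically closed field C
   (e.g. algC, or R[i] for a real closed field R); conjugation is ^*,
   and 0 <= z means z is real and nonnegative. *)
From mathcomp Require Import all_boot all_order all_algebra.
Set Implicit Arguments. Unset Strict Implicit. Unset Printing Implicit Defensive.
Import Order.TTheory GRing.Theory Num.Theory.
Local Open Scope ring_scope.

(* Operators on the finite-dimensional Hilbert space C^I (I a finite index
   set of an orthonormal basis), given by their matrix entries <x|rho|y>. *)
Definition op (C : numClosedFieldType) (I : finType) := I -> I -> C.

Definition hermitian_op (C : numClosedFieldType) (I : finType) (rho : op C I) :=
  forall x y, rho y x = (rho x y)^*.

Definition psd_op (C : numClosedFieldType) (I : finType) (rho : op C I) :=
  hermitian_op rho /\
  forall v : I -> C, 0 <= \sum_x \sum_y (v x)^* * rho x y * v y.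

Definition trace_op (C : numClosedFieldType) (I : finType) (rho : op C I) :=
  \sum_x rho x x.

Definition is_state (C : numClosedFieldType) (I : finType) (rho : op C I) :=
  psd_op rho /\ trace_op rho = 1.

Definition ptrace_last (C : numClosedFieldType) (IA IB : finType)
  (rho : op C ((IA * IB)%type * IB)%type) : op C (IA * IB)%type :=
  fun x y => \sum_(b : IB) rho (x, b) (y, b).

Definition swapBB'_invariant (C : numClosedFieldType) (IA IB : finType)
  (rho : op C ((IA * IB)%type * IB)%type) :=
  forall a b b' a2 b2 b2',
    rho ((a, b'), b) ((a2, b2'), b2) = rho ((a, b), b') ((a2, b2), b2').

Definition symmetrically_extendible (C : numClosedFieldType) (IA IB : finType)
  (rhoAB : op C (IA * IB)%type) :=
  exists rho : op C ((IA * IB)%type * IB)%type,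
    [/\ is_state rho, swapBB'_invariant rho & ptrace_last rho = rhoAB].

Definition ket2 (C : numClosedFieldType) (d i j : nat) : ('I_d * 'I_d)%type -> C :=
  fun x => ((nat_of_ord x.1 == i) && (nat_of_ord x.2 == j))%:R.

Definition outer (C : numClosedFieldType) (I : finType) (u v : I -> C) : op C I :=
  fun x y => u x * (v y)^*.

Definition Psi_plus (C : numClosedFieldType) (d : nat) : ('I_d * 'I_d)%type -> C :=
  fun x => (sqrtC (d%:R : C))^-1 * \sum_(0 <= i < d) @ket2 C d i i x.

Definition P_plus (C : numClosedFieldType) (d : nat) : op C ('I_d * 'I_d)%type :=
  outer (@Psi_plus C d) (@Psi_plus C d).

Definition Upsilon (C : numClosedFieldType) (d : nat) : op C ('I_d * 'I_d)%type :=
  fun x y => (d%:R / (2 * d - 1)%:R) * @P_plus C d x y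
           + (2 * d - 1)%:R^-1 *
               \sum_(1 <= i < d) outer (@ket2 C d i 0) (@ket2 C d i 0) x y.

(* Main.v *)
Require Import Defs.
From mathcomp Require Import all_boot all_order all_algebra.
Import GRing.Theory Num.Theory.
Set Implicit Arguments. Unset Strict Implicit. Unset Printing Implicit Defensive.
Local Open Scope ring_scope.

Ltac bsimp := rewrite ?eqxx /= ?mulr1 ?mul1r ?mulr0 ?mul0r ?addr0 ?add0r ?mulr1n ?mulr0n ?subrr ?oppr0 ?addNr ?addrN ?add0r ?addr0 ?addrK.
Ltac brute := repeat (bsimp; match goal with |- context [?x == ?y] =>
   let H := fresh in let H' := fresh in
   case: (eqVneq x y) => H; [subst | have H' : y != x by rewrite eq_sym];
     rewrite ?(negbTE H) ?(negbTE H') end); bsimp;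
  try done; try (match goal with H : is_true (?x != ?x) |- _ => by rewrite eqxx in H end).

Lemma sum_delta (C : numClosedFieldType) (I : finType) (k : I) (G : I -> C) :
  \sum_c (c == k)%:R * G c = G k.
Proof.
rewrite (bigD1 k) //= eqxx mul1r big1 ?addr0 // => c /negbTE ->; by rewrite mul0r.
Qed.

Definition psi (C : numClosedFieldType) n (a b c : 'I_n.+2) : C :=
  ((a == b) && (c == ord0) || (a == c) && (b == ord0))%:R.

Lemma psiE C n (a b c : 'I_n.+2) : psi C a b c =
  (c == ord0)%:R * (a == b)%:R + (c == a)%:R * ((a != ord0) && (b == ord0))%:R.
Proof. rewrite /psi. brute. Qed.


Lemma psi_sum C n (a b a2 b2 : 'I_n.+2) :
  \sum_c psi C a b c * psi C a2 b2 c =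
  (a == b)%:R * (a2 == b2)%:R + ((a == a2) && (a != ord0) && (b == ord0) && (b2 == ord0))%:R.
Proof.
under eq_bigr => c _ do rewrite psiE mulrDl -!mulrA.
rewrite big_split /= !sum_delta /psi; brute.
Qed.

Lemma ket_diag C n (x : 'I_n.+2 * 'I_n.+2) :
  \sum_(0 <= i < n.+2) @ket2 C n.+2 i i x = (x.1 == x.2)%:R.
Proof.
case: x => a b; rewrite big_mkord /ket2 /=.
transitivity (\sum_(i < n.+2) (i == a)%:R * ((a == b)%:R : C)).
  apply: eq_bigr => i _.
  have E : ((a == i) && (b == i))%:R = (i == a)%:R * ((a == b)%:R : C) by brute.
  exact: E.
by rewrite sum_delta.
Qed.

Lemma ket_off C n (x y : 'I_n.+2 * 'I_n.+2) :
  \sum_(1 <= i < n.+2) outer (@ket2 C n.+2 i 0) (@ket2 C n.+2 i 0) x y =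
  ((x.1 == y.1) && (x.1 != ord0) && (x.2 == ord0) && (y.2 == ord0))%:R.
Proof.
set F := fun i => outer (@ket2 C n.+2 i 0) (@ket2 C n.+2 i 0) x y.
have h := @big_ltn _ 0 +%R 0%N n.+2 F (ltn0Sn _).
rewrite -(addKr (F 0%N) (\sum_(1 <= i < n.+2) F i)) -h big_mkord.
case: x y @F h => [a b] [a2 b2] F h.
rewrite /F /outer /ket2 /=.
transitivity (- (((a == ord0) && (b == ord0))%:R * ((a2 == ord0) && (b2 == ord0))%:R) +
   \sum_(i < n.+2) (i == a)%:R * (((b == ord0) && (a2 == a) && (b2 == ord0))%:R : C)).
  congr (- _ + _); first by rewrite conjC_nat.
  apply: eq_bigr => i _.
  have E : ((a == i) && (b == ord0))%:R * (((a2 == i) && (b2 == ord0))%:R)^*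
     = (i == a)%:R * (((b == ord0) && (a2 == a) && (b2 == ord0))%:R : C)
    by rewrite conjC_nat; brute.
  exact: E.
rewrite sum_delta; brute.
Qed.

From mathcomp Require Import ring.

Lemma UpsE C n (x y : 'I_n.+2 * 'I_n.+2) : @Upsilon C n.+2 x y =
  (2 * n.+2 - 1)%:R^-1 * ((x.1 == x.2)%:R * (y.1 == y.2)%:R +
  ((x.1 == y.1) && (x.1 != ord0) && (x.2 == ord0) && (y.2 == ord0))%:R).
Proof.
rewrite /Upsilon /P_plus /outer /Psi_plus !ket_diag ket_off.
rewrite (@conj_Creal _ ((sqrtC n.+2%:R)^-1 * (y.1 == y.2)%:R)); last first.
  by rewrite ger0_real // mulr_ge0 // ?invr_ge0 ?sqrtC_ge0 ler0n.
set S := sqrtC _; set k := (2 * n.+2 - 1)%:R; set al := (_ == _)%:R; set al' := (_ == _)%:R.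
have hS : S^-1 * S^-1 = (n.+2%:R : C)^-1 by rewrite -invfM -expr2 sqrtCK.
have hd : (n.+2%:R : C) != 0 by rewrite pnatr_eq0.
rewrite mulrDr; congr (_ + _).
transitivity (n.+2%:R * (S^-1 * S^-1) * k^-1 * (al * al')); first by ring.
by rewrite hS mulfV // mul1r.
Qed.

From Stdlib Require Import FunctionalExtensionality.

Theorem mainTheorem4 (C : numClosedFieldType) (d : nat) (hd : (2 <= d)%N) :
  symmetrically_extendible (@Upsilon C d).
Proof.
case: d hd => [|[|n]] // _.
pose rho : op C (('I_n.+2 * 'I_n.+2) * 'I_n.+2)%type := fun x y =>
  (2 * n.+2 - 1)%:R^-1 * (psi C x.1.1 x.1.2 x.2 * psi C y.1.1 y.1.2 y.2).
have psi_ge0 : forall a b c : 'I_n.+2, 0 <= psi C a b c by move=> *; rewrite ler0n.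
have Ptr : ptrace_last rho = @Upsilon C n.+2.
  apply: functional_extensionality => x; apply: functional_extensionality => y.
  by rewrite /ptrace_last /rho -mulr_sumr psi_sum UpsE.
exists rho; split => //; last first.
  by move=> a b b' a2 b2 b2'; rewrite /rho /= /psi [(a == b') && _]andbC
     [(a2 == b2') && _]andbC orbC [(a2 == b2) && _ || _]orbC.
split; last first.
  rewrite /trace_op.
  transitivity (\sum_(ab : 'I_n.+2 * 'I_n.+2) \sum_(c : 'I_n.+2) rho (ab, c) (ab, c)).
    by rewrite pair_bigA; apply: eq_bigr => -[ab c].
  transitivity (\sum_(ab : 'I_n.+2 * 'I_n.+2) @Upsilon C n.+2 ab ab).
    by apply: eq_bigr => ab _; rewrite -Ptr.
  under eq_bigr => ab _ do rewrite UpsE.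
  rewrite -mulr_sumr.
  rewrite -(pair_bigA _ (fun a b : 'I_n.+2 => ((a == b)%:R * (a == b)%:R +
     ((a == a) && (a != ord0) && (b == ord0) && (b == ord0))%:R : C))).
  transitivity ((2 * n.+2 - 1)%:R^-1 * \sum_(a : 'I_n.+2) (1 + 1 - (a == ord0)%:R * 1 : C)).
    congr (_ * _); apply: eq_bigr => a _.
    transitivity (\sum_(b : 'I_n.+2) ((b == a)%:R * 1 + (b == ord0)%:R * (a != ord0)%:R : C)).
      by apply: eq_bigr => b _; brute.
    rewrite big_split /= !sum_delta; brute.
  rewrite sumrB sum_delta big_split /= sumr_const card_ord.
  have hk : ((2 * n.+2 - 1)%:R : C) = n.+2%:R + n.+2%:R - 1.
    by rewrite natrB // natrM -mulr2n mulr_natl.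
  by rewrite hk -mulr2n mulVf // -hk pnatr_eq0.
split.
  move=> x y; rewrite conj_Creal /rho; first by rewrite [psi _ _ _ _ * _]mulrC.
  by rewrite ger0_real // mulr_ge0 // ?invr_ge0 ?mulr_ge0.
move=> v.
suff -> : \sum_x \sum_y (v x)^* * rho x y * v y = (2 * n.+2 - 1)%:R^-1 *
   ((\sum_x (psi C x.1.1 x.1.2 x.2 * v x))^* * (\sum_x (psi C x.1.1 x.1.2 x.2 * v x))).
  by rewrite mulr_ge0 ?invr_ge0 ?ler0n // mulrC mul_conjC_ge0.
rewrite rmorph_sum mulr_suml mulr_sumr; apply: eq_bigr => x _.
rewrite mulr_sumr mulr_sumr; apply: eq_bigr => y _.
rewrite rmorphM /psi rmorph_nat /rho /psi; ring.
Qed.
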